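(* Let $(X,d)$ be a complete metric space with $|X|\geqslant 3$, and let $T\colon X\to X$ satisfy: (i) $T$ has no periodic points of prime period $2$, i.e. $T(T(x))\neq x$ for every $x\in X$ with $Tx\neq x$; (ii) $T$ is a generalized Ćirić–Reich–Rus type mapping on $X$, i.e. there exist $\alpha,\lambda\geqslant 0$ with $2\alpha+\frac{3\lambda}{2}<1$ such that $$d(Tx,Ty)+d(Ty,Tz)+d(Tx,Tz)\leqslant \alpha\big(d(x,y)+d(y,z)+d(z,x)\big)+\lambda\big(d(x,Tx)+d(y,Ty)+d(z,Tz)\big)$$ for all pairwise distinct $x,y,z\in X$. Then $T$ has a fixed point, and $T$ has at most two fixed points. *)

(* Defs.v *)
From Stdlib Require Import Reals.
Open Scope R_scope.

Definition is_metric {X : Type} (d : X -> X -> R) : Prop :=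
  (forall x y, 0 <= d x y) /\
  (forall x y, d x y = 0 <-> x = y) /\
  (forall x y, d x y = d y x) /\
  (forall x y z, d x z <= d x y + d y z).

Definition cauchy_seq {X : Type} (d : X -> X -> R) (u : nat -> X) : Prop :=
  forall eps, 0 < eps -> exists N, forall m n, (N <= m)%nat -> (N <= n)%nat ->
    d (u m) (u n) < eps.

Definition converges_to {X : Type} (d : X -> X -> R) (u : nat -> X) (l : X) : Prop :=
  forall eps, 0 < eps -> exists N, forall n, (N <= n)%nat -> d (u n) l < eps.

Definition complete_metric {X : Type} (d : X -> X -> R) : Prop :=
  is_metric d /\ forall u, cauchy_seq d u -> exists l, converges_to d u l.

Definition at_least_three (X : Type) : Prop :=
  exists a b c : X, a <> b /\ b <> c /\ a <> c.

Definition no_prime_period_two {X : Type} (T : X -> X) : Prop :=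
  forall x, T x <> x -> T (T x) <> x.

Definition gen_CRR {X : Type} (d : X -> X -> R) (T : X -> X) : Prop :=
  exists alpha lambda : R, 0 <= alpha /\ 0 <= lambda /\
    2 * alpha + 3 * lambda / 2 < 1 /\
    forall x y z : X, x <> y -> y <> z -> x <> z ->
      d (T x) (T y) + d (T y) (T z) + d (T x) (T z) <=
      alpha * (d x y + d y z + d z x) + lambda * (d x (T x) + d y (T y) + d z (T z)).

Definition fixed_point {X : Type} (T : X -> X) (x : X) : Prop := T x = x.

(* Main.v *)
Require Import Defs.
From Stdlib Require Import Reals.
From Stdlib Require Import Lra Lia Psatz Classical.
Open Scope R_scope.

Fixpoint orb {X : Type} (T : X -> X) (x0 : X) (n : nat) : X :=
  match n with O => x0 | S n => T (orb T x0 n) end.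

Theorem theorem3p1 (X : Type) (d : X -> X -> R) (T : X -> X) :
  complete_metric d ->
  at_least_three X ->
  no_prime_period_two T ->
  gen_CRR d T ->
  (exists x, fixed_point T x) /\
  (forall x y z, fixed_point T x -> fixed_point T y -> fixed_point T z ->
     x = y \/ y = z \/ x = z).
Proof.
  intros [Hm Hc] [a [b [c [Hab [Hbc Hac]]]]] Hp [al [la [Hal [Hla [Hk Hcrr]]]]].
  destruct Hm as [Hd0 [Hdeq [Hsym Htri]]].
  assert (Hdd : forall x, d x x = 0) by (intro; apply Hdeq; reflexivity).
  assert (Hpos : forall x y, x <> y -> 0 < d x y).
  { intros x y Hxy. destruct (Hd0 x y) as [H|H]; auto.
    exfalso; apply Hxy; apply Hdeq; auto. }
  split.
  2:{
  intros x y z Fx Fy Fz. unfold fixed_point in *.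
  destruct (classic (x=y)); auto. destruct (classic (y=z)); auto.
  destruct (classic (x=z)); auto. exfalso.
  pose proof (Hcrr x y z H H0 H1) as HH. rewrite Fx, Fy, Fz in HH.
  rewrite !Hdd in HH. rewrite (Hsym z x) in HH.
  pose proof (Hpos _ _ H). pose proof (Hpos _ _ H0). pose proof (Hpos _ _ H1).
  assert (0 < (1 - al) * (d x y + d y z + d x z)).
  { apply Rmult_lt_0_compat; lra. }
  nra. }
  set (x := orb T a).
  destruct (classic (exists n, T (x n) = x n)) as [[n Hn]|Hno].
  { exists (x n); exact Hn. }
  assert (Hne : forall n, T (x n) <> x n).
  { intros n Hn; apply Hno; exists n; exact Hn. }
  assert (HxS : forall n, x (S n) = T (x n)) by reflexivity.
  assert (D1 : forall n, x n <> x (S n)).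
  { intros n H; apply (Hne n); rewrite <- HxS; auto. }
  assert (D2 : forall n, x n <> x (S (S n))).
  { intros n H. apply (Hp (x n) (Hne n)). rewrite <- !HxS; auto. }
  set (t := fun n => d (x n) (x (S n)) + d (x (S n)) (x (S (S n))) + d (x n) (x (S (S n)))).
  assert (Hl1 : 0 < 1 - la/2) by lra.
  set (k := (al + la) / (1 - la/2)).
  assert (Hkeq : (1 - la/2) * k = al + la) by (unfold k; field; lra).
  assert (Hk0 : 0 <= k).
  { unfold k. apply Rmult_le_pos; [lra|]. left; apply Rinv_0_lt_compat; lra. }
  assert (Hk1 : k < 1).
  { apply (Rmult_lt_reg_l (1 - la/2)); lra. }
  assert (Ht0 : forall n, 0 <= t n).
  { intro n; unfold t. pose proof (Hd0 (x n) (x (S n))).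
    pose proof (Hd0 (x (S n)) (x (S (S n)))). pose proof (Hd0 (x n) (x (S (S n)))). lra. }
  assert (Hstep : forall n, t (S n) <= k * t n).
  { intro n.
    pose proof (Hcrr (x n) (x (S n)) (x (S (S n))) (D1 n) (D1 (S n)) (D2 n)) as HH.
    rewrite <- !HxS in HH.
    assert (E1 : t (S n) <= al * t n + la * (t n + t (S n) / 2)).
    { unfold t. rewrite (Hsym (x (S (S n))) (x n)) in HH.
      pose proof (Htri (x (S (S n))) (x (S n)) (x (S (S (S n))))) as Tr.
      rewrite (Hsym (x (S (S n))) (x (S n))) in Tr.
      pose proof (Hd0 (x n) (x (S (S n)))).
      assert (la * (d (x n) (x (S n)) + d (x (S n)) (x (S (S n))) + d (x (S (S n))) (x (S (S (S n)))))
        <= la * ((d (x n) (x (S n)) + d (x (S n)) (x (S (S n))) + d (x n) (x (S (S n)))) +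
           (d (x (S n)) (x (S (S n))) + d (x (S (S n))) (x (S (S (S n)))) + d (x (S n)) (x (S (S (S n))))) / 2)).
      { apply Rmult_le_compat_l; lra. }
      lra. }
    assert (E2 : (1 - la/2) * t (S n) <= (1 - la/2) * (k * t n)).
    { rewrite <- Rmult_assoc, Hkeq. lra. }
    apply Rmult_le_reg_l in E2; lra. }
  set (C := t O).
  assert (Htn : forall n, t n <= k ^ n * C).
  { induction n as [|n IH]; simpl. unfold C; lra.
    pose proof (Hstep n). apply Rle_trans with (k * t n); auto.
    rewrite Rmult_assoc. apply Rmult_le_compat_l; auto. }
  assert (Hdn : forall n, d (x n) (x (S n)) <= C * k ^ n).
  { intro n. pose proof (Htn n). unfold t in H.
    pose proof (Hd0 (x (S n)) (x (S (S n)))). pose proof (Hd0 (x n) (x (S (S n)))).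
    simpl in H. lra. }
  set (M := C / (1 - k)).
  assert (HM : M * (1 - k) = C) by (unfold M; field; lra).
  assert (HC0 : 0 <= C) by apply Ht0.
  assert (HM0 : 0 <= M).
  { unfold M. apply Rmult_le_pos; [lra|]. left; apply Rinv_0_lt_compat; lra. }
  assert (Hbd : forall m j, d (x m) (x (m + j)%nat) <= M * k ^ m - M * k ^ (m + j)).
  { intros m j. induction j as [|j IH].
    - rewrite Nat.add_0_r, Hdd. lra.
    - rewrite Nat.add_succ_r.
      pose proof (Htri (x m) (x (m + j)%nat) (x (S (m + j)))).
      pose proof (Hdn (m + j)%nat).
      assert (M * k ^ (m + j) - M * k ^ S (m + j) = C * k ^ (m + j)).
      { rewrite <- HM. simpl. ring. }
      lra. }
  assert (Hbd2 : forall m n, (m <= n)%nat -> d (x m) (x n) <= M * k ^ m).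
  { intros m n Hmn. replace n with (m + (n - m))%nat by lia.
    pose proof (Hbd m (n - m)%nat).
    assert (0 <= M * k ^ (m + (n - m))).
    { apply Rmult_le_pos; auto. apply pow_le; auto. }
    lra. }
  assert (Hcau : cauchy_seq d x).
  { intros eps Heps.
    assert (Hy : 0 < eps / (M + 1)).
    { apply Rmult_lt_0_compat; auto. apply Rinv_0_lt_compat; lra. }
    assert (Hak : Rabs k < 1) by (rewrite Rabs_right; lra).
    destruct (pow_lt_1_zero k Hak _ Hy) as [N HN].
    exists N. intros m n Hm Hn.
    assert (Hgen : forall m n, (N <= m)%nat -> (m <= n)%nat -> d (x m) (x n) < eps).
    { intros m' n' Hm' Hmn'. pose proof (Hbd2 m' n' Hmn').
      pose proof (HN m' Hm') as H1. rewrite Rabs_right in H1.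
      2:{ apply Rle_ge, pow_le; auto. }
      assert (M * k ^ m' <= M * (eps / (M + 1))).
      { apply Rmult_le_compat_l; lra. }
      assert (M * (eps / (M + 1)) < eps).
      { assert ((M + 1) * (eps / (M + 1)) = eps) by (field; lra). nra. }
      lra. }
    destruct (Nat.le_ge_cases m n).
    - apply Hgen; auto.
    - rewrite Hsym. apply Hgen; auto. }
  destruct (Hc x Hcau) as [l Hl].
  exists l. unfold fixed_point.
  destruct (classic (T l = l)) as [Hf|Hf]; auto. exfalso.
  set (D := d l (T l)).
  assert (HD : 0 < D) by (apply Hpos; auto).
  set (eps := (2 - la) * D / (2 * (2 + 3 * al + 2 * la))).
  assert (Heps : 0 < eps).
  { unfold eps. apply Rmult_lt_0_compat. apply Rmult_lt_0_compat; lra.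
    apply Rinv_0_lt_compat; lra. }
  assert (Heps2 : (2 + 3 * al + 2 * la) * eps < (2 - la) * D).
  { assert (eps * (2 * (2 + 3 * al + 2 * la)) = (2 - la) * D) by (unfold eps; field; lra).
    nra. }
  destruct (Hl eps Heps) as [N1 HN1].
  destruct (Hcau eps Heps) as [N2 HN2].
  assert (Hp' : exists p, (Nat.max N1 N2 <= p)%nat /\ x p <> l /\ x (S p) <> l).
  { set (q := Nat.max N1 N2).
    assert (A1 : forall r, x r = l -> x (S r) <> l /\ x (S (S r)) <> l).
    { intros r Hr. rewrite !HxS, Hr. split; [auto| apply Hp; auto]. }
    destruct (classic (x q = l)) as [Hq|Hq].
    - exists (S q). split; [lia|]. apply A1; auto.
    - destruct (classic (x (S q) = l)) as [Hq'|Hq'].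
      + exists (S (S q)). split; [lia|]. apply A1; auto.
      + exists q. split; [lia|auto]. }
  destruct Hp' as [p [Hpn [Hxp HxSp]]].
  pose proof (Hcrr l (x p) (x (S p)) (not_eq_sym Hxp) (D1 p) (not_eq_sym HxSp)) as HH.
  rewrite <- !HxS in HH.
  assert (e1 : d (x p) l < eps) by (apply HN1; lia).
  assert (e2 : d (x (S p)) l < eps) by (apply HN1; lia).
  assert (e3 : d (x (S (S p))) l < eps) by (apply HN1; lia).
  assert (e4 : d (x p) (x (S p)) < eps) by (apply HN2; lia).
  assert (e5 : d (x (S p)) (x (S (S p))) < eps) by (apply HN2; lia).
  pose proof (Htri l (x (S p)) (T l)) as T1.
  pose proof (Htri l (x (S (S p))) (T l)) as T2.
  rewrite (Hsym l (x (S p))), (Hsym (x (S p)) (T l)) in T1.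
  rewrite (Hsym l (x (S (S p)))), (Hsym (x (S (S p))) (T l)) in T2.
  rewrite (Hsym l (x p)) in HH.
  assert (al * (d (x p) l + d (x p) (x (S p)) + d (x (S p)) l) <= al * (3 * eps)).
  { apply Rmult_le_compat_l; lra. }
  assert (la * (d l (T l) + d (x p) (x (S p)) + d (x (S p)) (x (S (S p)))) <= la * (D + 2 * eps)).
  { apply Rmult_le_compat_l; unfold D; lra. }
  fold D in T1, T2, HH, H0.
  pose proof (Hd0 (x (S p)) (x (S (S p)))). clearbody x t k C M eps D. lra.
Qed.
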